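(* Let $k\ge3$. There exist $n_0(k)$ and $C_k$ such that for all $n\ge n_0(k)$ and all $\gamma$ with $|\gamma-\frac12|\le n^{-1/3}$, there exists a unique $\lambda=\lambda(\gamma)\in\mathbb R$ with $\sum_{j=1}^{k-1}j\,\nu_{\gamma,\lambda}(j)=k\gamma$. Furthermore $\lambda(1/2)=0$ and $|\lambda(\gamma)|\le C_k n^{-1/3}$ for all such $\gamma$.
   Context: For $\gamma\in(0,1)$ let $p_\gamma(j)=\binom kj\gamma^j(1-\gamma)^{k-j}$, and for $\lambda\in\mathbb R$ define the probability measure $\nu_{\gamma,\lambda}$ on $\{1,\dots,k-1\}$ by $\nu_{\gamma,\lambda}(j)=p_\gamma(j)e^{\lambda j}/\sum_{i=1}^{k-1}p_\gamma(i)e^{\lambda i}$. *)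

(* Defs.v *)
From HB Require Import structures.
From mathcomp Require Import all_boot all_order all_algebra.
From mathcomp Require Import all_classical all_reals all_analysis.
Set Implicit Arguments. Unset Strict Implicit. Unset Printing Implicit Defensive.
Import Order.TTheory GRing.Theory Num.Theory.
Local Open Scope ring_scope.

Definition pgam {R : realType} (k : nat) (g : R) (j : nat) : R :=
  'C(k, j)%:R * g ^+ j * (1 - g) ^+ (k - j).

Definition nu {R : realType} (k : nat) (g l : R) (j : nat) : R :=
  pgam k g j * expR (l * j%:R) /
  (\sum_(1 <= i < k) pgam k g i * expR (l * i%:R)).

Definition nu_mean {R : realType} (k : nat) (g l : R) : R :=
  \sum_(1 <= j < k) j%:R * nu k g l j.

(* Main.v *)
Require Import Defs.
From HB Require Import structures.
From mathcomp Require Import all_boot all_order all_algebra.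
From mathcomp Require Import all_classical all_reals all_analysis.
From mathcomp Require Import ring lra.
Import Order.TTheory GRing.Theory Num.Theory.
Import numFieldNormedType.Exports.
Local Open Scope ring_scope.

Lemma pgam_ge0 {R : realType} k (g : R) j : 0 <= g <= 1 -> 0 <= pgam k g j.
Proof.
move=> /andP[g0 g1]; rewrite /pgam.
have h1 : 0 <= 1 - g by lra.
by rewrite !mulr_ge0 ?exprn_ge0.
Qed.

Lemma pgam_sum {R : realType} k (g : R) : \sum_(0 <= j < k.+1) pgam k g j = 1.
Proof.
rewrite big_mkord; have := exprDn (1 - g) g k; rewrite subrK expr1n => ->.
apply: eq_bigr => i _; rewrite /pgam -mulr_natl; ring.
Qed.

Lemma pgam_mean {R : realType} k (g : R) :
  \sum_(0 <= j < k.+1) j%:R * pgam k g j = k%:R * g.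
Proof.
case: k => [|m]; first by rewrite big_nat1 mul0r mul0r.
rewrite big_nat_recl // mul0r add0r.
rewrite (eq_bigr (fun i => (m.+1)%:R * g * pgam m g i)); last first.
  move=> i _; rewrite /pgam subSS exprS.
  have e : (i.+1)%:R * 'C(m.+1, i.+1)%:R = (m.+1)%:R * 'C(m, i)%:R :> R.
    by rewrite -!natrM -mul_bin_diag.
  transitivity (((i.+1)%:R * 'C(m.+1, i.+1)%:R) * (g * g ^+ i) * (1 - g) ^+ (m - i) : R);
    first ring.
  rewrite e; ring.
by rewrite -mulr_sumr pgam_sum mulr1.
Qed.

Definition tt {R : realType} k (g : R) (j : nat) : R := j%:R - k%:R * g.

Lemma S_closed {R : realType} k (g : R) : (0 < k)%N ->
  \sum_(1 <= j < k) tt k g j * pgam k g j =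
  k%:R * g * (1 - g) ^+ k - k%:R * (1 - g) * g ^+ k.
Proof.
move=> k0.
have full : \sum_(0 <= j < k.+1) tt k g j * pgam k g j = 0.
  rewrite (eq_bigr (fun j => j%:R * pgam k g j - k%:R * g * pgam k g j));
    last by move=> j _; rewrite /tt mulrBl.
  by rewrite sumrB -mulr_sumr pgam_mean pgam_sum mulr1 subrr.
move: full; rewrite big_nat_recr // big_ltn // /tt /pgam.
rewrite bin0 binn subn0 subnn !expr0 !mulr1 !mul1r => h.
move: h; set s := \sum_(_ <= _ < _) _ => h.
have -> : s = s - 0 by rewrite subr0.
rewrite -[X in s - X]h.
rewrite /=; ring.
Qed.
Lemma powdiff {R : realType} (a b : R) m : 0 <= a <= 1 -> 0 <= b <= 1 ->
  `|a ^+ m - b ^+ m| <= m%:R * `|a - b|.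
Proof.
move=> /andP[a0 a1] /andP[b0 b1]; elim: m => [|m IH].
  by rewrite !expr0 subrr normr0 mul0r.
have -> : a ^+ m.+1 - b ^+ m.+1 = a * (a ^+ m - b ^+ m) + (a - b) * b ^+ m
  by rewrite !exprS; ring.
apply: (le_trans (ler_normD _ _)); rewrite !normrM.
have h1 : `|a| * `|a ^+ m - b ^+ m| <= `|a ^+ m - b ^+ m|.
  by rewrite ger0_norm //; apply: ler_piMl.
have h2 : `|a - b| * `|b ^+ m| <= `|a - b|.
  rewrite [`|b ^+ m|]ger0_norm ?exprn_ge0 //; apply: ler_piMr => //; exact: exprn_ile1.
rewrite mulrSr mulrDl mul1r; apply: lerD => //; exact: le_trans h1 IH.
Qed.

Lemma S_bound {R : realType} k (g : R) : (0 < k)%N -> 0 <= g <= 1 ->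
  `|k%:R * g * (1 - g) ^+ k - k%:R * (1 - g) * g ^+ k| <=
  k%:R * k%:R * `|(1 - g) - g|.
Proof.
case: k => [//|m] _ /andP[g0 g1].
have -> : (m.+1)%:R * g * (1 - g) ^+ m.+1 - (m.+1)%:R * (1 - g) * g ^+ m.+1
  = ((m.+1)%:R * g * (1 - g)) * ((1 - g) ^+ m - g ^+ m) by rewrite !exprS; ring.
rewrite normrM -[X in _ <= X]mulrA; apply: ler_pM => //.
- rewrite ger0_norm; last by rewrite !mulr_ge0 //; lra.
  rewrite -mulrA; apply: ler_piMr; [exact: ler0n | nra].
- have h : 0 <= 1 - g <= 1 by apply/andP; split; lra.
  have h' : 0 <= g <= 1 by apply/andP; split; lra.
  apply: (le_trans (powdiff _ _ m h h')).
  apply: ler_wpM2r => //; by rewrite ler_nat leqnSn.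
Qed.

Lemma key_ineq {R : realType} (K d t : R) : 0 <= d -> d * `|t| <= K - 1 ->
  t + d * t ^+ 2 / K <= t * expR (d * t).
Proof.
move=> d0 hb.
have K1 : 1 <= K by have := mulr_ge0 d0 (normr_ge0 t); lra.
have K0 : 0 < K by lra.
have dt2 : 0 <= d * t ^+ 2 by rewrite mulr_ge0 // sqr_ge0.
case: (lerP 0 t) => t0.
- have := expR_ge1Dx (d * t); rewrite ger0_norm // in hb => he.
  have : d * t ^+ 2 / K <= d * t ^+ 2 by rewrite ler_pdivrMr //; apply: ler_peMr.
  nra.
- rewrite ltr0_norm // in hb.
  set x := - (d * t).
  have x0 : 0 <= x by rewrite /x; nra.
  set E := expR (d * t).
  have E0 : 0 < E by exact: expR_gt0.
  have hE : E * expR x = 1 by rewrite /E -expRD /x subrr expR0.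
  have hx := expR_ge1Dx x.
  have E1 : E * (1 + x) <= 1 by rewrite -[X in _ <= X]hE ler_pM2l.
  have xK : 1 + x <= K by rewrite /x; lra.
  have -> : d * t ^+ 2 = (- t) * x by rewrite /x; ring.
  have : (- t) * x / K <= t * E - t.
    rewrite ler_pdivrMr //.
    have E1' : 0 <= 1 - E by nra.
    have p1 : 0 <= (- t) * (1 - E) * (K - (1 + x)).
      by rewrite !mulr_ge0 //; lra.
    have p2 : 0 <= (- t) * (1 - E * (1 + x)) by rewrite mulr_ge0 //; lra.
    nra.
  lra.
Qed.

Definition Hf {R : realType} k (g l : R) : R :=
  \sum_(1 <= j < k) tt k g j * pgam k g j * expR (l * tt k g j).

Lemma tt_bound {R : realType} k (g : R) j : 0 <= g <= 1 -> (1 <= j < k)%N ->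
  `|tt k g j| <= k%:R.
Proof.
move=> /andP[g0 g1] /andP[j1 jk]; rewrite /tt ler_norml.
have hj : (j%:R : R) <= k%:R by rewrite ler_nat ltnW.
have hj0 : (0 : R) <= j%:R by exact: ler0n.
have hk : k%:R * g <= k%:R :> R by apply: ler_piMr => //; exact: ler0n.
have hk0 : 0 <= k%:R * g :> R by rewrite mulr_ge0 // ler0n.
apply/andP; split; lra.
Qed.

Lemma H_ge {R : realType} k (g d : R) : 0 <= g <= 1 -> 0 <= d <= 1 ->
  \sum_(1 <= j < k) tt k g j * pgam k g j
  + d / (k%:R + 1) * \sum_(1 <= j < k) pgam k g j * tt k g j ^+ 2 <= Hf k g d.
Proof.
move=> hg /andP[d0 d1]; rewrite mulr_sumr -big_split /=; apply: ler_sum_nat => j hj.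
have hb : d * `|tt k g j| <= (k%:R + 1) - 1.
  rewrite addrK; have := tt_bound k g j hg hj => h.
  have := normr_ge0 (tt k g j); have : (0:R) <= k%:R by exact: ler0n.
  nra.
have := key_ineq _ _ _ d0 hb => h.
have hp := pgam_ge0 k g j hg.
have := ler_wpM2l hp h.
set t := tt k g j; set w := pgam k g j => h2.
have -> : t * w + d / (k%:R + 1) * (w * t ^+ 2) = w * (t + d * t ^+ 2 / (k%:R + 1))
  by ring.
by have -> : t * w * expR (d * t) = w * (t * expR (d * t)) by ring.
Qed.

Lemma H_le {R : realType} k (g d : R) : 0 <= g <= 1 -> 0 <= d <= 1 ->
  Hf k g (- d) <= \sum_(1 <= j < k) tt k g j * pgam k g j
  - d / (k%:R + 1) * \sum_(1 <= j < k) pgam k g j * tt k g j ^+ 2.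
Proof.
move=> hg /andP[d0 d1]; rewrite mulr_sumr -sumrB /=; apply: ler_sum_nat => j hj.
have hb : d * `|- tt k g j| <= (k%:R + 1) - 1.
  rewrite addrK normrN; have := tt_bound k g j hg hj => h.
  have := normr_ge0 (tt k g j); have : (0:R) <= k%:R by exact: ler0n.
  nra.
have := key_ineq _ _ _ d0 hb => h.
have hp := pgam_ge0 k g j hg.
have := ler_wpM2l hp h.
set t := tt k g j; set w := pgam k g j => h2.
have -> : t * w * expR (- d * t) = - (w * (- t * expR (d * - t))).
  by rewrite mulrN mulNr; ring.
have -> : t * w - d / (k%:R + 1) * (w * t ^+ 2) = - (w * (- t + d * (- t) ^+ 2 / (k%:R + 1)))
  by ring.
by rewrite lerN2.
Qed.

Lemma Q_ge {R : realType} k (g : R) : (1 < k)%N -> 0 <= g <= 1 ->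
  pgam k g 1 * tt k g 1 ^+ 2 <= \sum_(1 <= j < k) pgam k g j * tt k g j ^+ 2.
Proof.
move=> k1 hg; rewrite big_ltn //= lerDl; apply: sumr_ge0 => j _.
by rewrite mulr_ge0 ?pgam_ge0 ?sqr_ge0.
Qed.

Lemma term_le {R : realType} (t w l l' : R) : 0 <= w -> l <= l' ->
  t * w * expR (l * t) <= t * w * expR (l' * t).
Proof.
move=> w0 ll.
have e : forall a, t * w * expR (a * t) = w * (t * expR (a * t)) by move=> a; ring.
rewrite !e; apply: (ler_wpM2l w0).
case: (ltrgt0P t) => [t0|t0|->]; last by rewrite !mul0r.
- by rewrite ler_pM2l // ler_expR ler_pM2r.
- by rewrite ler_nM2l // ler_expR ler_nM2r.
Qed.

Lemma term_lt {R : realType} (t w l l' : R) : 0 < w -> t != 0 -> l < l' ->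
  t * w * expR (l * t) < t * w * expR (l' * t).
Proof.
move=> w0 tn ll.
have e : forall a, t * w * expR (a * t) = w * (t * expR (a * t)) by move=> a; ring.
rewrite !e.
rewrite ltr_pM2l //.
case: (ltrgt0P t) tn => [t0|t0|->] //= _.
- by rewrite ltr_pM2l // ltr_expR ltr_pM2r.
- by rewrite ltr_nM2l // ltr_expR ltr_nM2r.
Qed.

Lemma H_lt {R : realType} k (g l l' : R) : (1 < k)%N -> 0 <= g <= 1 ->
  0 < pgam k g 1 -> tt k g 1 != 0 -> l < l' -> Hf k g l < Hf k g l'.
Proof.
move=> k1 hg p1 t1 ll; rewrite /Hf !(big_ltn k1) /=.
apply: ltr_leD; first exact: term_lt.
apply: ler_sum_nat => j _; apply: term_le; [exact: pgam_ge0 | exact: ltW].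
Qed.

Lemma cont_sum {R : realType} (s : seq nat) (f : nat -> R -> R) :
  (forall i, continuous (f i)) -> continuous (fun x => \sum_(i <- s) f i x).
Proof.
move=> hf; elim: s => [|a s IH] x.
  under eq_fun do rewrite big_nil. exact: cvg_cst.
under eq_fun do rewrite big_cons.
exact: (continuousD (hf a x) (IH x)).
Qed.

Lemma cont_term {R : realType} (a b : R) : continuous (fun y : R => a * expR (y * b)).
Proof.
move=> x.
apply: cvgM; first exact: cvg_cst.
change ((expR \o (fun y => y * b)) @ x --> expR (x * b))%classic.
apply: continuous_comp; last exact: continuous_expR.
apply: cvgM; [exact: cvg_id | exact: cvg_cst].
Qed.

Lemma H_cont {R : realType} k (g : R) : continuous (Hf k g).
Proof.
rewrite /Hf; apply: cont_sum => j; exact: cont_term.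
Qed.
Lemma pgam1 {R : realType} k (g : R) : pgam k g 1 = k%:R * g * (1 - g) ^+ (k - 1).
Proof. by rewrite /pgam bin1 expr1. Qed.

Lemma pgam1_gt0 {R : realType} k (g : R) : (0 < k)%N -> 0 < g < 1 -> 0 < pgam k g 1.
Proof.
move=> k0 /andP[g0 g1]; rewrite pgam1.
have h : 0 < 1 - g by lra.
by rewrite !mulr_gt0 ?exprn_gt0 // ltr0n.
Qed.

Lemma nu_H {R : realType} k (g l : R) : (1 < k)%N -> 0 < g < 1 ->
  (nu_mean k g l = k%:R * g <-> Hf k g l = 0).
Proof.
move=> k1 hg.
have hg' : 0 <= g <= 1 by case/andP: hg => ? ?; apply/andP; split; lra.
set D := \sum_(1 <= i < k) pgam k g i * expR (l * i%:R).
set N := \sum_(1 <= j < k) j%:R * pgam k g j * expR (l * j%:R).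
have D0 : 0 < D.
  rewrite /D big_ltn //=.
  have p : 0 < pgam k g 1 * expR (l * 1%:R).
    by rewrite mulr_gt0 ?expR_gt0 // pgam1_gt0 // ltnW.
  have q : 0 <= \sum_(2 <= i < k) pgam k g i * expR (l * i%:R).
    by apply: sumr_ge0 => i _; rewrite mulr_ge0 ?pgam_ge0 // ltW // expR_gt0.
  lra.
have eN : nu_mean k g l = N / D.
  rewrite /nu_mean /nu /N mulr_suml; apply: eq_bigr => j _; rewrite /D; ring.
set c := k%:R * g.
have eH : Hf k g l = expR (- (l * c)) * (N - c * D).
  rewrite /Hf /N /D mulr_sumr -sumrB mulr_sumr; apply: eq_bigr => j _.
  rewrite /tt -/c mulrBr expRD; ring.
rewrite eN eH; split => h.
- have -> : N = c * D by rewrite -h divfK // gt_eqF.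
  by rewrite subrr mulr0.
- move/eqP: h; rewrite mulf_eq0 gt_eqF ?expR_gt0 //= subr_eq0 => /eqP ->.
  by rewrite mulfK // gt_eqF.
Qed.
Lemma half_case {R : realType} k : (2 < k)%N -> nu_mean k (2^-1 : R) 0 = k%:R * 2^-1.
Proof.
move=> k2; have k1 : (1 < k)%N by apply: ltnW.
have hg : 0 < (2^-1 : R) < 1.
  apply/andP; split; lra.
apply/(nu_H k _ 0 k1 hg).
rewrite /Hf (eq_bigr (fun j => tt k (2^-1 : R) j * pgam k 2^-1 j)); last first.
  by move=> j _; rewrite mul0r expR0 mulr1.
rewrite S_closed ?(ltnW k1) //.
have -> : 1 - 2^-1 = 2^-1 :> R by lra.
by rewrite subrr.
Qed.

Lemma pow_third {R : realType} (n : nat) :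
  (n%:R `^ (- 3^-1) : R) ^+ 3 = n%:R ^-1.
Proof.
rewrite -powR_mulrn ?powR_ge0 // -powRrM.
have -> : - 3^-1 * 3%:R = -1 :> R by field.
by rewrite powR_inv1 // ler0n.
Qed.
Theorem lemma2p5 (R : realType) (k : nat) (hk : (3 <= k)%N) :
  exists (n0 : nat) (C : R),
    nu_mean k (2^-1 : R) 0 = k%:R * 2^-1 /\
    forall n : nat, (n0 <= n)%N ->
    forall g : R, `|g - 2^-1| <= n%:R `^ (- 3^-1) ->
      exists l : R,
        [/\ nu_mean k g l = k%:R * g,
            (forall l' : R, nu_mean k g l' = k%:R * g -> l' = l) &
            `|l| <= C * n%:R `^ (- 3^-1)].
Proof.
set M := (32 * k ^ 2 * k.+1 * 4 ^ k)%N.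
exists (M ^ 3)%N, M%:R; split; first exact: half_case.
move=> n hn g hg.
set e := n%:R `^ (- 3^-1) in hg *.
have k1 : (1 < k)%N by apply: ltnW.
have k0 : (0 < k)%N by apply: ltnW.
have kr3 : 3 <= k%:R :> R by rewrite (ler_nat R 3 k).
set P4 := (4 : R) ^+ k.
have P41 : 1 <= P4 by rewrite /P4 exprn_ege1 //; lra.
have eMr : M%:R = 32 * k%:R ^+ 2 * (k%:R + 1) * P4 :> R.
  by rewrite /M !natrM !natrX /P4 -(natr1 k) expr2.
have e0 : 0 <= e by exact: powR_ge0.
have M0 : (0 < M)%N by rewrite /M !muln_gt0 !expn_gt0 k0.
have Mr0 : (0 : R) < M%:R by rewrite ltr0n.
have hnr : (M%:R : R) ^+ 3 <= n%:R by rewrite -natrX ler_nat.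
have n0 : (0 : R) < n%:R by apply: lt_le_trans hnr; exact: exprn_gt0.
set d := M%:R * e.
have d0 : 0 <= d by rewrite mulr_ge0 // ler0n.
have d1 : d <= 1.
  have h3 : d ^+ 3 <= 1.
    rewrite /d exprMn pow_third ler_pdivrMr // mul1r //.
  case: (lerP d 1) => // hd.
  have : 1 < d ^+ 3 by rewrite expr_gt1.
  lra.
have ke : k%:R * e * 4 <= 1.
  have : 4 * k%:R <= M%:R :> R.
    rewrite eMr.
    have h1 : k%:R <= k%:R ^+ 2 :> R by rewrite expr2 ler_peMr //; lra.
    have h2 : k%:R ^+ 2 <= k%:R ^+ 2 * (k%:R + 1) :> R by rewrite ler_peMr //; lra.
    have h3 : 32 * (k%:R ^+ 2 * (k%:R + 1)) <= 32 * (k%:R ^+ 2 * (k%:R + 1)) * P4 :> R.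
      by rewrite ler_peMr // mulr_ge0 //; lra.
    rewrite -(mulrA 32); lra.
  rewrite /d in d1; nra.
have hg' := hg; move: hg'; rewrite ler_norml => /andP[hg1 hg2].
have e12 : e * 12 <= 1.
  have : 3 * e <= k%:R * e by rewrite ler_wpM2r.
  lra.
have hg01 : 0 < g < 1 by apply/andP; split; lra.
have hg01' : 0 <= g <= 1 by apply/andP; split; lra.
have kg : 5 / 4 <= k%:R * g.
  have : k%:R * (- e) <= k%:R * (g - 2^-1) by rewrite ler_wpM2l // ler0n.
  rewrite mulrN mulrBr; lra.
have t1 : tt k g 1 <= - (1 / 4) by rewrite /tt; lra.
have t1n : tt k g 1 != 0 by apply/negP => /eqP h; lra.
have t2 : 1 / 16 <= tt k g 1 ^+ 2 by nra.
have p1 : 0 < pgam k g 1 by exact: pgam1_gt0.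
have pg : P4^-1 <= pgam k g 1.
  have eP : (4^-1 : R) ^+ k = 4^-1 * (4^-1) ^+ (k - 1) by rewrite -exprS subn1 prednK.
  rewrite pgam1 /P4 -exprVn eP.
  have h1 : (4^-1 : R) ^+ (k - 1) <= (1 - g) ^+ (k - 1).
    by apply: lerXn2r; rewrite ?nnegrE; lra.
  have h2 : 4^-1 <= k%:R * g by lra.
  apply: ler_pM h2 h1; [lra | apply: exprn_ge0; lra].
have hB : (16 * P4)^-1 <= \sum_(1 <= j < k) pgam k g j * tt k g j ^+ 2.
  apply: (le_trans _ (Q_ge k g k1 hg01')).
  have -> : (16 * P4)^-1 = P4^-1 * (1 / 16) by rewrite invfM mulrC div1r.
  apply: ler_pM => //; first by rewrite invr_ge0; lra.
have hS : `|\sum_(1 <= j < k) tt k g j * pgam k g j| <= 2 * k%:R ^+ 2 * e.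
  rewrite S_closed //.
  apply: (le_trans (S_bound k g k0 hg01')).
  have : `|1 - g - g| <= 2 * e by rewrite ler_norml; apply/andP; split; lra.
  move=> h.
  have kk : 0 <= k%:R * k%:R :> R by rewrite mulr_ge0 ?ler0n.
  have := ler_wpM2l kk h.
  rewrite expr2; nra.
move: hS; rewrite ler_norml => /andP[hS1 hS2].
have hY : d / (k%:R + 1) * (16 * P4)^-1 = 2 * k%:R ^+ 2 * e.
  rewrite /d eMr; field.
  repeat (apply/andP; split); apply/lt0r_neq0; lra.
have dK : 0 <= d / (k%:R + 1) by rewrite divr_ge0 //; lra.
have hQ := ler_wpM2l dK hB.
have Hpos : 0 <= Hf k g d.
  have hd : 0 <= d <= 1 by apply/andP; split.
  apply: (le_trans _ (H_ge k g d hg01' hd)); lra.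
have Hneg : Hf k g (- d) <= 0.
  have hd : 0 <= d <= 1 by apply/andP; split.
  apply: (le_trans (H_le k g d hg01' hd)); lra.
have dd : - d <= d by lra.
have mm : Num.min (Hf k g (- d)) (Hf k g d) <= 0 <= Num.max (Hf k g (- d)) (Hf k g d).
  by rewrite ge_min le_max Hneg Hpos orbT.
have [l hl Hl] := IVT dd (continuous_subspaceT (H_cont k g)) mm.
exists l; split.
- exact/(nu_H k g l k1 hg01).
- move=> l' /(nu_H k g l' k1 hg01) Hl'.
  case: (ltgtP l' l) => // h.
  + by have := H_lt k g _ _ k1 hg01' p1 t1n h; rewrite Hl Hl' ltxx.
  + by have := H_lt k g _ _ k1 hg01' p1 t1n h; rewrite Hl Hl' ltxx.
- move: hl; rewrite in_itv /= => /andP[a b]; rewrite ler_norml; apply/andP; split; lra.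
Qed.
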